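(* The finitary symmetric group $\mathrm{FS}(\mathbb{N})$ is a proper subgroup of the bi-immune symmetric group $G_{\mathfrak{B}}$.
   Context: $\mathbb{N}$ denotes the non-negative integers, and $\mathrm{Sym}(\mathbb{N})$ the group of all permutations of $\mathbb{N}$ under composition ($g \circ f$ means apply $f$ first). The support of $\sigma \in \mathrm{Sym}(\mathbb{N})$ is $\{n : \sigma(n) \neq n\}$; $\mathrm{FS}(\mathbb{N})$ is the group of permutations with finite support. For $i \in \mathbb{N}$, $\sigma_{(i)}$ is the permutation swapping $i$ and $i+1$ and fixing all other numbers. For $A \subseteq \mathbb{N}$ with increasing enumeration $a_0 < a_1 < \cdots$, define $\sigma_A(x) = \lim_{n \to \infty} (\sigma_{(a_0)} \circ \sigma_{(a_1)} \circ \cdots \circ \sigma_{(a_n)})(x)$ (eventually constant for each $x$). A set $A$ is immune if it is infinite and contains no infinite computably enumerable subset; $A$ is bi-immune if both $A$ and $\mathbb{N} - A$ are immune. For bi-immune $A$, $\sigma_A$ is a permutation of $\mathbb{N}$. The bi-immune symmetric group $G_{\mathfrak{B}}$ is the subgroup of $\mathrm{Sym}(\mathbb{N})$ generated by $\{\sigma_A : A \text{ bi-immune}\}$. *)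

(* Defs.v *)
From Stdlib Require Import Arith List.
Import ListNotations.

Inductive PR : Type :=
| PZero : PR
| PSucc : PR
| PProj : nat -> PR
| PComp : PR -> list PR -> PR
| PRec  : PR -> PR -> PR           (* primitive recursion on the first argument *)
| PMin  : PR -> PR.                (* unbounded minimisation on the first argument *)

Inductive eval : PR -> list nat -> nat -> Prop :=
| ev_zero : forall v, eval PZero v 0
| ev_succ : forall x v, eval PSucc (x :: v) (S x)
| ev_proj : forall i v, i < length v -> eval (PProj i) v (nth i v 0)
| ev_comp : forall f gs v ws y,
    evals gs v ws -> eval f ws y -> eval (PComp f gs) v y
| ev_rec0 : forall f g v y, eval f v y -> eval (PRec f g) (0 :: v) y
| ev_recS : forall f g n v z y,
    eval (PRec f g) (n :: v) z -> eval g (n :: z :: v) y ->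
    eval (PRec f g) (S n :: v) y
| ev_min : forall f v n,
    eval f (n :: v) 0 ->
    (forall m, m < n -> exists k, eval f (m :: v) (S k)) ->
    eval (PMin f) v n
with evals : list PR -> list nat -> list nat -> Prop :=
| evs_nil : forall v, evals [] v []
| evs_cons : forall g gs v w ws,
    eval g v w -> evals gs v ws -> evals (g :: gs) v (w :: ws).

Definition natset := nat -> Prop.

Definition ce (A : natset) : Prop :=
  exists e : PR, forall n, A n <-> exists y, eval e [n] y.

Definition infinite (A : natset) : Prop :=
  forall m, exists n, m <= n /\ A n.

Definition immune (A : natset) : Prop :=
  infinite A /\
  ~ (exists B : natset, (forall n, B n -> A n) /\ infinite B /\ ce B).

Definition bi_immune (A : natset) : Prop :=
  immune A /\ immune (fun n => ~ A n).

Definition swap (i x : nat) : nat :=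
  if Nat.eqb x i then S i else if Nat.eqb x (S i) then i else x.

(** [partial_prod A m x y] : F_m(x) = y where F_0 = id and
    F_(m+1) = F_m o sigma_(m) if m in A, F_m otherwise; thus for
    a_0 < ... < a_n the elements of A below m,
    F_m = sigma_(a_0) o ... o sigma_(a_n). *)
Inductive partial_prod (A : natset) : nat -> nat -> nat -> Prop :=
| pp0 : forall x, partial_prod A 0 x x
| ppin : forall m x y, A m -> partial_prod A m (swap m x) y ->
    partial_prod A (S m) x y
| ppout : forall m x y, ~ A m -> partial_prod A m x y ->
    partial_prod A (S m) x y.

(** [sigma_is A x y] : sigma_A(x) = y, i.e. the partial products
    are eventually constant with value y at x. *)
Definition sigma_is (A : natset) (x y : nat) : Prop :=
  exists N, forall m, N <= m -> partial_prod A m x y.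

Definition bijective (f : nat -> nat) : Prop :=
  (forall x y, f x = f y -> x = y) /\ (forall y, exists x, f x = y).

Definition finitary (f : nat -> nat) : Prop :=
  bijective f /\ exists N, forall n, N <= n -> f n = n.

(** G_B: subgroup of Sym(N) generated by the sigma_A, A bi-immune:
    closure of the identity under left multiplication by generators
    and their inverses (functions taken up to extensional equality). *)
Inductive in_GB : (nat -> nat) -> Prop :=
| gb_id : in_GB (fun x => x)
| gb_ext : forall g h, in_GB g -> (forall x, g x = h x) -> in_GB h
| gb_mul : forall A g h, bi_immune A -> in_GB g ->
    (forall x, sigma_is A (g x) (h x)) -> in_GB h
| gb_inv : forall A g h, bi_immune A -> in_GB g ->
    (forall x, sigma_is A (h x) (g x)) -> in_GB h.         (* h = sigma_A^-1 o g *)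

(* Main.v *)
Require Import Defs.
From Stdlib Require Import Arith List Lia Cantor Classical ClassicalEpsilon.
Import ListNotations.

Definition P (x y : nat) : nat := Cantor.to_nat (x, y).
Lemma P_inj a b c d : P a b = P c d -> a = c /\ b = d.
Proof. intro H. pose proof (cancel_of_to (a,b)) as H1. pose proof (cancel_of_to (c,d)) as H2.
  unfold P in H. rewrite H in H1. rewrite H1 in H2. injection H2; auto. Qed.

Fixpoint enc (e : PR) : nat :=
  match e with
  | PZero => P 0 0
  | PSucc => P 1 0
  | PProj i => P 2 i
  | PComp f gs => P 3 (P (enc f) ((fix encl (l : list PR) : nat :=
        match l with [] => 0 | g :: l' => S (P (enc g) (encl l')) end) gs))
  | PRec f g => P 4 (P (enc f) (enc g))
  | PMin f => P 5 (enc f)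
  end.

Fixpoint enc_inj (e1 : PR) : forall e2, enc e1 = enc e2 -> e1 = e2.
Proof.
  destruct e1 as [| |i|f gs|f g|f]; intros [| |j|f' gs'|f' g'|f'] H; simpl in H;
    apply P_inj in H; destruct H as [H0 H]; try discriminate H0; try reflexivity.
  - subst; reflexivity.
  - apply P_inj in H. destruct H as [Hf Hl]. apply enc_inj in Hf. subst f'. f_equal.
    revert gs' Hl. induction gs as [|g gs IH]; intros [|g' gs'] Hl; try discriminate Hl; try reflexivity.
    injection Hl as Hl. apply P_inj in Hl. destruct Hl as [Hg Hl].
    apply enc_inj in Hg. subst g'. f_equal. apply IH. exact Hl.
  - apply P_inj in H. destruct H as [Hf Hg]. apply enc_inj in Hf. apply enc_inj in Hg. subst; reflexivity.
  - apply enc_inj in H. subst; reflexivity.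
Qed.

Definition dom (e : PR) : natset := fun n => exists y, eval e [n] y.

Lemma stage_ex (M n : nat) : exists p : nat * nat, M <= fst p /\ fst p < snd p /\
  (forall e, enc e = n -> infinite (dom e) -> dom e (fst p) /\ dom e (snd p)).
Proof.
  destruct (classic (exists e, enc e = n /\ infinite (dom e))) as [[e [He Hi]]|Hno].
  - destruct (Hi M) as [a [Ha Da]]. destruct (Hi (S a)) as [b [Hb Db]].
    exists (a, b). simpl. split; [lia|split;[lia|]].
    intros e' He' _. assert (e' = e) by (apply enc_inj; congruence). subst; auto.
  - exists (M, S M). simpl. split; [lia|split;[lia|]].
    intros e He Hi. exfalso. apply Hno. eauto.
Qed.

Definition step (M n : nat) : nat * nat :=
  proj1_sig (constructive_indefinite_description _ (stage_ex M n)).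

Lemma step_spec M n : M <= fst (step M n) /\ fst (step M n) < snd (step M n) /\
  (forall e, enc e = n -> infinite (dom e) -> dom e (fst (step M n)) /\ dom e (snd (step M n))).
Proof. unfold step. destruct (constructive_indefinite_description _ _) as [p Hp]. exact Hp. Qed.

Fixpoint bnd (K n : nat) : nat :=
  match n with 0 => K | S n' => S (snd (step (bnd K n') n')) end.
Definition aa K n := fst (step (bnd K n) n).
Definition bb K n := snd (step (bnd K n) n).

Lemma ab_bnd K n : bnd K n <= aa K n /\ aa K n < bb K n /\ bb K n < bnd K (S n).
Proof. unfold aa, bb. simpl. destruct (step_spec (bnd K n) n) as [H1 [H2 _]]. lia. Qed.

Lemma bnd_mono K n m : n <= m -> bnd K n <= bnd K m.
Proof. induction 1; auto. pose proof (ab_bnd K m). lia. Qed.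

Lemma bnd_ge K n : K + n <= bnd K n.
Proof. induction n as [|n IH]; simpl; [lia|]. pose proof (ab_bnd K n) as H. simpl in H. lia. Qed.

Lemma ab_distinct K m n : aa K m <> bb K n.
Proof.
  destruct (lt_eq_lt_dec m n) as [[H|H]|H].
  - pose proof (ab_bnd K m). pose proof (ab_bnd K n). pose proof (bnd_mono K (S m) n H). lia.
  - subst. pose proof (ab_bnd K n). lia.
  - pose proof (ab_bnd K m). pose proof (ab_bnd K n). pose proof (bnd_mono K (S n) m H). lia.
Qed.

Lemma diag_bi K (S : natset) : (forall n, S (aa K n)) -> (forall n, ~ S (bb K n)) -> bi_immune S.
Proof.
  intros HA HB. split; split.
  - intro m. exists (aa K m). split; auto. pose proof (ab_bnd K m). pose proof (bnd_ge K m). lia.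
  - intros [B [Hsub [Hinf [e He]]]].
    assert (Hi : infinite (dom e)).
    { intro m. destruct (Hinf m) as [n [Hn Bn]]. exists n. split; auto. apply He; auto. }
    destruct (step_spec (bnd K (enc e)) (enc e)) as [_ [_ H]].
    destruct (H e eq_refl Hi) as [_ Hb]. apply (HB (enc e)). apply Hsub. apply He. exact Hb.
  - intro m. exists (bb K m). split; auto. pose proof (ab_bnd K m). pose proof (bnd_ge K m). lia.
  - intros [B [Hsub [Hinf [e He]]]].
    assert (Hi : infinite (dom e)).
    { intro m. destruct (Hinf m) as [n [Hn Bn]]. exists n. split; auto. apply He; auto. }
    destruct (step_spec (bnd K (enc e)) (enc e)) as [_ [_ H]].
    destruct (H e eq_refl Hi) as [Ha _]. apply (Hsub (aa K (enc e))). apply He. exact Ha. apply HA.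
Qed.

Definition Abase K : natset := fun x => exists n, x = aa K n.

Lemma Abase_ge K x : Abase K x -> K <= x.
Proof. intros [n ->]. pose proof (ab_bnd K n). pose proof (bnd_ge K n). lia. Qed.

Lemma Abase_bi K : bi_immune (Abase K).
Proof. apply (diag_bi K). - intro n; exists n; auto. - intros n [m Hm]. apply (ab_distinct K m n). auto. Qed.

Lemma X_bi i : bi_immune (fun x => x = i \/ Abase (S (S i)) x).
Proof. apply (diag_bi (S (S i))).
  - intro n; right; exists n; auto.
  - intros n [H|[m Hm]].
    + pose proof (ab_bnd (S (S i)) n). pose proof (bnd_ge (S (S i)) n). lia.
    + apply (ab_distinct (S (S i)) m n). auto.
Qed.

Fixpoint F (A : natset) (m x : nat) : nat :=
  match m with
  | 0 => x
  | S m' => if excluded_middle_informative (A m') then F A m' (swap m' x) else F A m' x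
  end.

Ltac noif a := lazymatch a with context [if _ then _ else _] => fail | _ => idtac end.
Ltac swap_tac := unfold swap; repeat (match goal with |- context [Nat.eqb ?a ?b] =>
  noif a; noif b; destruct (Nat.eqb_spec a b) end; try lia).

Lemma swap_invol i x : swap i (swap i x) = x.
Proof. swap_tac. Qed.
Lemma swap_far m x : x <> m -> x <> S m -> swap m x = x.
Proof. intros. swap_tac. Qed.
Lemma swap_comm i m x : S (S i) <= m -> swap i (swap m x) = swap m (swap i x).
Proof. intros. swap_tac. Qed.

Lemma pp_F A m x : partial_prod A m x (F A m x).
Proof. revert x; induction m; intro x; simpl. constructor.
  destruct (excluded_middle_informative (A m)). apply ppin; auto. apply ppout; auto. Qed.

Lemma pp_fun A m x y : partial_prod A m x y -> y = F A m x.
Proof. induction 1; simpl; auto;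
  destruct (excluded_middle_informative (A m)); tauto. Qed.

Lemma F_stable A m x : S x <= m -> F A m x = F A (S x) x.
Proof. induction m as [|m IH]; intro H. lia.
  destruct (Nat.eq_dec m x). subst; auto.
  simpl. rewrite (swap_far m x) by lia.
  destruct (excluded_middle_informative (A m)); apply IH; lia. Qed.

Lemma sigma_F A x : sigma_is A x (F A (S x) x).
Proof. exists (S x). intros m Hm. rewrite <- (F_stable A m x Hm). apply pp_F. Qed.

Lemma F_large A m x : m < x -> F A m x = x.
Proof. revert x; induction m as [|m IH]; intros x H; simpl; auto.
  rewrite (swap_far m x) by lia.
  destruct (excluded_middle_informative (A m)); apply IH; lia. Qed.

Lemma F_agree A A' m x : (forall j, j < m -> (A j <-> A' j)) -> F A m x = F A' m x.
Proof. revert x; induction m as [|m IH]; intros x H; simpl; auto.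
  destruct (excluded_middle_informative (A m)) as [a|a];
  destruct (excluded_middle_informative (A' m)) as [b|b];
  try (apply IH; intros; apply H; lia);
  exfalso; specialize (H m (Nat.lt_succ_diag_r m)); tauto. Qed.

Lemma F_comm (B : natset) i : ~ B i -> ~ B (S i) ->
  forall m x, S i <= m -> F (fun y => y = i \/ B y) m x = F B m (swap i x).
Proof.
  intros Bi BSi. induction m as [|m IH]; intros x Hm. lia.
  destruct (Nat.eq_dec m i) as [->|Hmi].
  - simpl. destruct (excluded_middle_informative (i = i \/ B i)) as [_|c]; [|tauto].
    destruct (excluded_middle_informative (B i)) as [c|_]; [tauto|].
    apply F_agree. intros j Hj. split; [intros [->|?]; [lia|auto]|auto].
  - assert (S i <= m) by lia. simpl.
    destruct (excluded_middle_informative (m = i \/ B m)) as [[c|c]|c]; [lia| |].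
    + destruct (excluded_middle_informative (B m)) as [_|d]; [|tauto].
      rewrite IH by lia. rewrite swap_comm. auto.
      destruct (Nat.eq_dec m (S i)). subst; tauto. lia.
    + destruct (excluded_middle_informative (B m)) as [d|_]; [tauto|]. apply IH; auto.
Qed.

Lemma swap_closed i g : in_GB g -> in_GB (fun x => swap i (g x)).
Proof.
  intro Hg. set (B := Abase (S (S i))).
  assert (Bi : ~ B i) by (intro H; apply Abase_ge in H; lia).
  assert (BSi : ~ B (S i)) by (intro H; apply Abase_ge in H; lia).
  set (X := fun y => y = i \/ B y).
  assert (HX : bi_immune X) by apply X_bi.
  assert (HB : bi_immune B) by apply Abase_bi.
  assert (Hk : in_GB (fun x => F X (S (g x)) (g x))).
  { apply (gb_mul X g); auto. intro x. apply sigma_F. }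
  apply (gb_inv B _ _ HB Hk). intro x.
  set (y := g x). set (m := S (y + swap i y + i)).
  replace (F X (S y) y) with (F B (S (swap i y)) (swap i y)). apply sigma_F.
  rewrite <- (F_stable X m y) by lia. rewrite <- (F_stable B m (swap i y)) by lia.
  unfold X. rewrite F_comm; auto. lia.
Qed.

Lemma fin_GB N : forall f, (forall x y, f x = f y -> x = y) -> (forall n, N <= n -> f n = n) -> in_GB f.
Proof.
  induction N as [|N IH]; intros f Hinj Hb.
  - apply (gb_ext (fun x => x)). constructor. intro x; symmetry; apply Hb; lia.
  - assert (HfN : f N <= N).
    { destruct (le_lt_dec (f N) N); auto. exfalso.
      assert (f (f N) = f N) by (apply Hb; lia). apply Hinj in H. lia. }
    assert (Gen : forall d f, (forall x y, f x = f y -> x = y) -> (forall n, S N <= n -> f n = n) ->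
               f N <= N -> N - f N = d -> in_GB f).
    { clear f Hinj Hb HfN. induction d as [|d IHd]; intros f Hinj Hb HfN Hd.
      - apply IH; auto. intros n Hn. destruct (Nat.eq_dec n N). subst; lia. apply Hb; lia.
      - set (j := f N). set (f1 := fun x => swap j (f x)).
        assert (H1 : in_GB f1).
        { apply IHd.
          - intros x y H. unfold f1 in H. apply Hinj.
            rewrite <- (swap_invol j (f x)), <- (swap_invol j (f y)), H. auto.
          - intros n Hn. unfold f1. rewrite Hb by lia. apply swap_far; lia.
          - unfold f1. fold j. unfold swap. rewrite Nat.eqb_refl. lia.
          - unfold f1. fold j. unfold swap. rewrite Nat.eqb_refl. lia. }
        apply (gb_ext _ _ (swap_closed j f1 H1)). intro x. unfold f1. apply swap_invol. }
    apply (Gen (N - f N)); auto.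
Qed.

Theorem lemma2p5 :
  (forall f : nat -> nat, finitary f -> in_GB f) /\
  (exists f : nat -> nat, in_GB f /\ ~ finitary f).
Proof.
  split.
  - intros f [[Hinj _] [N HN]]. apply (fin_GB N); auto.
  - exists (fun x => F (Abase 0) (S x) x). split.
    + apply (gb_mul (Abase 0) (fun x => x)). apply Abase_bi. constructor. intro; apply sigma_F.
    + intros [_ [N HN]]. specialize (HN (aa 0 N)).
      assert (N <= aa 0 N) by (pose proof (ab_bnd 0 N); pose proof (bnd_ge 0 N); lia).
      specialize (HN H). simpl in HN.
      destruct (excluded_middle_informative (Abase 0 (aa 0 N))) as [_|c].
      * unfold swap in HN at 1. rewrite Nat.eqb_refl in HN. rewrite F_large in HN; lia.
      * apply c. exists N; auto.
Qed.
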